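(* Let $g\in G\setminus\{0\}$, $e\in E_N$, and $\sigma\in\Sigma_{E_N}$ be such that $(d\sigma)_p-\sigma_e=g$ for all $p\in\hat\partial e$, and assume $\partial\hat\partial\partial\hat\partial e\subseteq E_N$. Then either $|(\mathrm{supp}\,\sigma)^+|\ge7$, or $|(\mathrm{supp}\,\sigma)^+|=6$ and $|(\mathrm{supp}\,d\sigma)^+|\ge12$.
   Context: Work on $\mathbb Z^4$; oriented edges come in pairs $e,-e$; $dx_j=(x,x+\mathbf e_j)$ positively oriented. For $p=dx_{j_1}\wedge dx_{j_2}$ ($j_1<j_2$), $\partial p=\{dx_{j_1},d(x+\mathbf e_{j_1})_{j_2},-d(x+\mathbf e_{j_2})_{j_1},-dx_{j_2}\}$, $\partial(-p)=-\partial p$ (positive plaquettes are the $dx_{j_1}\wedge dx_{j_2}$). $\hat\partial e=\{p:e\in\partial p\}$; for sets $\partial A=\bigcup_{p\in A}\partial p$, $\hat\partial B=\bigcup_{e\in B}\hat\partial e$. $B_N=[-N,N]^4\cap\mathbb Z^4$; $E_N,P_N$ the oriented edges/plaquettes with all vertices in $B_N$. $G=\mathbb Z_n$. $\Sigma_{E_N}$: maps $\sigma:E_N\to G$ with $\sigma_{-e}=-\sigma_e$; $(d\sigma)_p=\sum_{e\in\partial p}\sigma_e$. $\mathrm{supp}$ denotes support and $(\cdot)^+$ the positively oriented elements. *)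

(* Defs.v *)
From mathcomp Require Import all_boot all_order all_algebra.
Set Implicit Arguments. Unset Strict Implicit. Unset Printing Implicit Defensive.
Import Order.TTheory GRing.Theory Num.Theory.
Local Open Scope ring_scope.

Definition vertex := {ffun 'I_4 -> int}.
Definition shift (x : vertex) (j : 'I_4) : vertex :=
  [ffun i => x i + (i == j)%:R].

(* oriented edge (x, j, s): s = true is dx_j = (x, x+e_j); s = false is -dx_j *)
Definition edge := (vertex * 'I_4 * bool)%type.
Definition eneg (e : edge) : edge := (e.1.1, e.1.2, ~~ e.2).
Definition epos (e : edge) : bool := e.2.

(* oriented plaquette (x, j1, j2, s), meaningful when j1 < j2;
   s = true is dx_{j1} /\ dx_{j2}, s = false its negative *)
Definition plaq := (vertex * 'I_4 * 'I_4 * bool)%type.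
Definition pvalid (p : plaq) : bool := (p.1.1.2 < p.1.2)%N.
Definition ppos (p : plaq) : bool := p.2.

Definition bd (p : plaq) : seq edge :=
  let: (x, j1, j2, s) := p in
  let l := [:: (x, j1, true); (shift x j1, j2, true);
               (shift x j2, j1, false); (x, j2, false)] in
  if s then l else map eneg l.

Definition in_hat (e : edge) (p : plaq) : bool := pvalid p && (e \in bd p).

Definition inB (N : nat) (x : vertex) : bool :=
  [forall i, (- (N%:Z) <= x i) && (x i <= N%:Z)].
Definition in_EN (N : nat) (e : edge) : bool :=
  inB N e.1.1 && inB N (shift e.1.1 e.1.2).
(* all vertices of p in B_N  (the vertices of p are the endpoints of its edges) *)
Definition in_PN (N : nat) (p : plaq) : bool := pvalid p && all (in_EN N) (bd p).

Definition bhbh_sub (N : nat) (e : edge) : Prop :=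
  forall (p1 : plaq) (e1 : edge) (p2 : plaq) (e2 : edge),
    in_hat e p1 -> e1 \in bd p1 -> in_hat e1 p2 -> e2 \in bd p2 -> in_EN N e2.

(* sigma in Sigma_{E_N}: given by its values on positive edges dx_j,
   extended antisymmetrically: sigma_{-e} = - sigma_e *)
Definition sig (n : nat) (sigma : vertex -> 'I_4 -> 'Z_n) (e : edge) : 'Z_n :=
  if e.2 then sigma e.1.1 e.1.2 else - sigma e.1.1 e.1.2.
Definition dsig (n : nat) (sigma : vertex -> 'I_4 -> 'Z_n) (p : plaq) : 'Z_n :=
  \sum_(e <- bd p) sig sigma e.

Definition boxv (N : nat) : seq vertex :=
  map (fun f : {ffun 'I_4 -> 'I_(N + N).+1} =>
         [ffun i => (nat_of_ord (f i))%:Z - N%:Z] : vertex)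
      (enum {ffun 'I_4 -> 'I_(N + N).+1}).
Definition posE (N : nat) : seq edge :=
  [seq e <- [seq (x, j, true) | x <- boxv N, j <- enum 'I_4] | in_EN N e].
Definition posP (N : nat) : seq plaq :=
  [seq p <- 
     flatten [seq [seq (x, j1, j2, true) | j1 <- enum 'I_4, j2 <- enum 'I_4] | x <- boxv N]
     | in_PN N p].

Definition card_supp_sigma (n N : nat) (sigma : vertex -> 'I_4 -> 'Z_n) : nat :=
  size (undup [seq e <- posE N | sig sigma e != 0]).
Definition card_supp_dsigma (n N : nat) (sigma : vertex -> 'I_4 -> 'Z_n) : nat :=
  size (undup [seq p <- posP N | dsig sigma p != 0]).

(* Main.v *)
Require Import Defs.
From mathcomp Require Import all_boot all_order all_algebra.
Import Order.TTheory GRing.Theory Num.Theory.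
Local Open Scope ring_scope.
Definition cv := (int * int * int * int)%type.
Definition cget (c : cv) (i : nat) : int :=
  match i with 0%N => c.1.1.1 | 1%N => c.1.1.2 | 2%N => c.1.2 | _ => c.2 end.
Definition cmk (f : nat -> int) : cv := (f 0%N, f 1%N, f 2%N, f 3%N).
Definition cshift (c : cv) (j : 'I_4) : cv := cmk (fun i => cget c i + (i == j)%:R).
Definition cedge := (cv * 'I_4 * bool)%type.
Definition cplaq := (cv * 'I_4 * 'I_4 * bool)%type.
Definition ceneg (e : cedge) : cedge := (e.1.1, e.1.2, ~~ e.2).
Definition cbd (p : cplaq) : seq cedge :=
  let: (x, j1, j2, s) := p in
  let l := [:: (x, j1, true); (cshift x j1, j2, true);
               (cshift x j2, j1, false); (x, j2, false)] in
  if s then l else map ceneg l.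
Definition cpvalid (p : cplaq) : bool := (p.1.1.2 < p.1.2)%N.
Definition cin_hat (e : cedge) (p : cplaq) : bool := cpvalid p && (e \in cbd p).
Definition o0 : cv := (0,0,0,0).
Definition m101 : seq int := [:: -1; 0; 1].
Definition cube : seq cv := flatten (map (fun a => flatten (map (fun b => flatten (map (fun c => map (fun d => (a,b,c,d)) m101) m101)) m101)) m101).
Definition ords : seq 'I_4 := [:: @Ordinal 4 0 isT; @Ordinal 4 1 isT; @Ordinal 4 2 isT; @Ordinal 4 3 isT].
Definition allpl : seq cplaq := flatten (map (fun y => flatten (map (fun j1 => flatten (map (fun j2 => [:: (y,j1,j2,true); (y,j1,j2,false)]) ords)) ords)) cube).
Definition Ps0 (j : 'I_4) s := [seq p <- allpl | cin_hat (o0, j, s) p].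
Definition cU (f : cedge) : cedge := (f.1.1, f.1.2, true).
Definition cunshift (c : cv) (k : 'I_4) : cv := cmk (fun i => cget c i - (i == k)%:R).
Definition cands (t : cedge) : seq cplaq :=
  flatten (map (fun k => if k == t.1.2 then [::] else
     let a := if (t.1.2 < k)%N then t.1.2 else k in
     let b := if (t.1.2 < k)%N then k else t.1.2 in
     [:: (t.1.1, a, b, true); (cunshift t.1.1 k, a, b, true)]) ords).
Definition isol (A : seq cedge) (t : cedge) (Q : cplaq) : bool :=
  [&& cpvalid Q, Q.2, count (fun f => cU f == t) (cbd Q) == 1%N &
      all (fun f => (cU f == t) || (cU f \notin A)) (cbd Q)].
Definition dummyP : cplaq := (o0, ord0, ord0, true).
Definition outw (A : seq cedge) (t : cedge) : cplaq := head dummyP [seq Q <- cands t | isol A t Q].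
Definition cpos (p : cplaq) : cplaq := (p.1, true).
Definition Ts0 (j : 'I_4) s (P : cplaq) : seq cedge := [seq cU f | f <- cbd P & f != (o0, j, s)].
Definition allT j s := flatten (map (Ts0 j s) (Ps0 j s)).
Definition good (j : 'I_4) (s : bool) : bool :=
  let Ps := Ps0 j s in let A := allT j s in
  [&& size Ps == 6%N, all (fun P => count (pred1 (o0, j, s)) (cbd P) == 1%N) Ps,
      uniq (cU (o0, j, s) :: A), all (fun t => isol A t (outw A t)) A,
      uniq (map (outw A) A), uniq (map cpos Ps) &
      all (fun Q => Q \notin map cpos Ps) (map (outw A) A)].
Definition good_all : bool := all (fun j => good j true && good j false) ords.
Lemma good_allP : good_all. Proof. Time vm_compute. reflexivity. Qed.

Definition embed (x : vertex) (c : cv) : vertex := [ffun i : 'I_4 => cget c i + x i].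
Definition embE x (f : cedge) : edge := (embed x f.1.1, f.1.2, f.2).
Definition embP x (p : cplaq) : plaq := (embed x p.1.1.1, p.1.1.2, p.1.2, p.2).

Lemma cget_cmk f (i : 'I_4) : cget (cmk f) i = f i.
Proof. by case: i => [[|[|[|[|m]]]] Hm]. Qed.

Lemma embed_shift x c j : embed x (cshift c j) = shift (embed x c) j.
Proof. apply/ffunP => i; rewrite !ffunE /cshift. rewrite (cget_cmk _ i). by rewrite addrAC. Qed.

Lemma embed_o0 x : embed x o0 = x.
Proof. apply/ffunP => i; rewrite !ffunE; case: i => [[|[|[|[|m]]]] Hm] /=; rewrite ?add0r //. Qed.

Lemma embed_inj x : injective (embed x).
Proof.
move=> [[[a b] c] d] [[[a' b'] c'] d'] H.
have H0 := congr1 (fun f : vertex => f (@Ordinal 4 0 isT)) H.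
have H1 := congr1 (fun f : vertex => f (@Ordinal 4 1 isT)) H.
have H2 := congr1 (fun f : vertex => f (@Ordinal 4 2 isT)) H.
have H3 := congr1 (fun f : vertex => f (@Ordinal 4 3 isT)) H.
move: H0 H1 H2 H3; rewrite /= !ffunE /= => /addIr -> /addIr -> /addIr -> /addIr -> //.
Qed.

Lemma embE_inj x : injective (embE x).
Proof. by move=> [[a b] c] [[a' b'] c'] [/embed_inj -> -> ->]. Qed.

Lemma embP_inj x : injective (embP x).
Proof. by move=> [[[a b] c] d] [[[a' b'] c'] d'] [/embed_inj -> -> -> ->]. Qed.

Lemma bd_emb x p : bd (embP x p) = map (embE x) (cbd p).
Proof. case: p => [[[y j1] j2] []]; rewrite /bd /cbd /embP /embE /= ?embed_shift //. Qed.

Lemma inhat_emb x f p : in_hat (embE x f) (embP x p) = cin_hat f p.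
Proof. by rewrite /in_hat /cin_hat bd_emb mem_map //; apply: embE_inj. Qed.

Lemma mem_ords (j : 'I_4) : j \in ords.
Proof. by case: j => [[|[|[|[|m]]]] Hm]. Qed.

Lemma goodP j s : good j s.
Proof. by have := good_allP; move/allP/(_ j (mem_ords j))/andP => [] ? ?; case: s. Qed.

Lemma sum_one (V : zmodType) (T : eqType) (l : seq T) (p : pred T) (F : T -> V) a :
  a \in l -> p a -> count p l = 1%N -> (forall f, f \in l -> ~~ p f -> F f = 0) ->
  \sum_(f <- l) F f = F a.
Proof.
elim: l => [|b l IH] //= Ha pa Hc HF; rewrite big_cons.
case: (boolP (p b)) => pb.
  move: Hc; rewrite pb add1n => -[] Hc.
  have Hl : forall f, f \in l -> ~~ p f.
    move=> f fl; apply/negP => pf; have : has p l by apply/hasP; exists f.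
    by rewrite has_count Hc.
  rewrite big1_seq ?addr0; last by move=> f /andP [_ fl]; apply: HF; rewrite ?inE ?fl ?orbT // Hl.
  move: Ha; rewrite inE => /orP [/eqP -> //|al].
  by move: (Hl a al); rewrite pa.
rewrite HF ?inE ?eqxx // add0r; apply: IH => //.
- move: Ha; rewrite inE => /orP [/eqP Hab|//]; by move: pb; rewrite -Hab pa.
- by move: Hc; rewrite (negbTE pb).
- by move=> f fl; apply: HF; rewrite inE fl orbT.
Qed.

Lemma head_filter (T : eqType) (p : pred T) (l : seq T) d :
  has p l -> head d (filter p l) \in l /\ p (head d (filter p l)).
Proof.
rewrite has_filter; case E: (filter p l) => [|y r] //= _.
have : y \in filter p l by rewrite E inE eqxx.
by rewrite mem_filter => /andP [].
Qed.

Lemma uniq_flat (S T : eqType) (Tf : S -> seq T) (h : S -> T) (l : seq S) :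
  uniq (flatten (map Tf l)) -> (forall P, P \in l -> h P \in Tf P) -> uniq (map h l).
Proof.
elim: l => [|a l IH] //= Hu Hh.
move: Hu; rewrite cat_uniq => /and3P [_ Hd Hu].
rewrite IH // ?andbT; last by move=> P Pl; apply: Hh; rewrite inE Pl orbT.
apply/mapP => -[P Pl EP].
move/negP: Hd; apply; apply/hasP; exists (h P).
  by apply/flatten_mapP; exists P => //; apply: Hh; rewrite inE Pl orbT.
by rewrite -EP; apply: Hh; rewrite inE eqxx.
Qed.

Section Sig.
Variables (n : nat) (sigma : vertex -> 'I_4 -> 'Z_n).

Lemma sig_eneg f : sig sigma (eneg f) = - sig sigma f.
Proof. by case: f => [[y j] []]; rewrite /sig /= ?opprK. Qed.

Lemma sigU f : (sig sigma (f.1.1, f.1.2, true) == 0) = (sig sigma f == 0).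
Proof. by case: f => [[y j] []]; rewrite /sig /= ?oppr_eq0. Qed.

Lemma bd_false y j1 j2 : bd (y, j1, j2, false) = map eneg (bd (y, j1, j2, true)).
Proof. by []. Qed.

Lemma dsig_pos p : (dsig sigma (p.1, true) == 0) = (dsig sigma p == 0).
Proof.
case: p => [[[y j1] j2] []] //=.
by rewrite /dsig bd_false big_map (eq_bigr _ (fun f _ => sig_eneg f)) sumrN oppr_eq0.
Qed.
End Sig.

Lemma in_EN_eneg N f : in_EN N (eneg f) = in_EN N f.
Proof. by []. Qed.

Lemma in_PN_pos N p : in_PN N (p.1, true) = in_PN N p.
Proof.
case: p => [[[y j1] j2] []] //.
Qed.

Lemma inB_boxv N x : inB N x -> x \in boxv N.
Proof.
move/forallP => Hx.
apply/mapP; exists [ffun i => inord (absz (x i + N%:Z)) : 'I_(N + N).+1]; first by rewrite mem_enum.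
apply/ffunP => i; rewrite !ffunE.
have /andP [H1 H2] := Hx i.
have H0 : 0 <= x i + N%:Z by rewrite -lerBlDr sub0r.
rewrite inordK.
  by rewrite gez0_abs // addrK.
rewrite ltnS -(@ler_nat int) natrD.
have -> : ((absz (x i + N%:Z))%:R : int) = x i + N%:Z by rewrite natz gez0_abs.
by rewrite natz lerD2r.
Qed.

Lemma posE_mem N u : u.2 = true -> in_EN N u -> u \in posE N.
Proof.
case: u => [[y j] b] /= -> H.
rewrite /posE mem_filter H /=.
apply/allpairsP; exists (y, j) => /=; split => //; last by rewrite mem_enum.
by apply: inB_boxv; move: H => /andP [].
Qed.

Lemma posE_inv N u : u \in posE N -> u.2 = true /\ in_EN N u.
Proof.
rewrite /posE mem_filter => /andP [H /allpairsP [[y j] [_ _ E]]]; by rewrite E; rewrite E in H.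
Qed.

Lemma posP_mem N p : p.2 = true -> in_PN N p -> p \in posP N.
Proof.
case: p => [[[y j1] j2] b] /= -> H.
rewrite /posP mem_filter H /=.
apply/flatten_mapP; exists y.
  by apply: inB_boxv; move: H => /andP [_ /andP [/andP [] ]].
by apply/allpairsP; exists (j1, j2); rewrite /= !mem_enum.
Qed.

Lemma card_lb (T : eqType) (s L : seq T) : uniq s -> {subset s <= L} -> (size s <= size (undup L))%N.
Proof. by move=> Hu Hs; apply: uniq_leq_size => // y /Hs; rewrite mem_undup. Qed.

Lemma card_ub (T : eqType) (s L : seq T) : {subset L <= s} -> (size (undup L) <= size s)%N.
Proof. by move=> Hs; apply: uniq_leq_size; rewrite ?undup_uniq // => y; rewrite mem_undup => /Hs. Qed.

Lemma cU_cases (a b : cedge) : cU a = cU b -> a = b \/ a = ceneg b.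
Proof. by case: a b => [[y j] []] [[y' j'] []] [-> ->]; auto. Qed.

Lemma cbd_false q : cbd (q, false) = map ceneg (cbd (q, true)).
Proof. by case: q => [[y j1] j2]. Qed.

Theorem mainTheorem6 (n N : nat) (hn : (1 < n)%N) (g : 'Z_n)
    (sigma : vertex -> 'I_4 -> 'Z_n) (e : edge) :
  g != 0 ->
  in_EN N e ->
  (forall p : plaq, in_hat e p -> dsig sigma p - sig sigma e = g) ->
  bhbh_sub N e ->
  (7 <= card_supp_sigma N sigma)%N \/
  (card_supp_sigma N sigma = 6%N /\ (12 <= card_supp_dsigma N sigma)%N).
Proof.
move=> g0 HeN Hhat Hbh.
case: e HeN Hhat Hbh => [[x j] s] HeN Hhat Hbh.
pose e0 : cedge := (o0, j, s).
have He : ((x, j, s) : edge) = embE x e0 by rewrite /embE /= embed_o0.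
rewrite He in HeN Hhat Hbh.
have := goodP j s; rewrite /good.
set Ps := Ps0 j s; set A := allT j s.
move=> /and5P [/eqP G1 /allP G2 G3 /allP G4 /andP [G5 /andP [G6 /allP G7]]].
move: G3; rewrite cons_uniq => /andP [ne0 uA].
have PsP : forall P, P \in Ps -> cin_hat e0 P by move=> P; rewrite mem_filter => /andP [].
have PsH : forall P, P \in Ps -> in_hat (embE x e0) (embP x P) by move=> P PP; rewrite inhat_emb PsP.
have hEP : forall P, P \in Ps -> forall f, f \in cbd P -> in_EN N (embE x f).
  move=> P PP f fP; have HP := PsH P PP.
  apply: (Hbh (embP x P) (embE x e0) (embP x P)) => //; first by case/andP: HP.
  by rewrite bd_emb map_f.
pose f0 P := head e0 [seq f <- cbd P | (f != e0) && (sig sigma (embE x f) != 0)].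
have Hf0 : forall P, P \in Ps -> [/\ f0 P \in cbd P, f0 P != e0 & sig sigma (embE x (f0 P)) != 0].
  move=> P PP.
  have Hh : has (fun f => (f != e0) && (sig sigma (embE x f) != 0)) (cbd P).
    apply/negPn/negP => /hasPn Hn.
    have Hc := G2 P PP.
    have He0 : e0 \in cbd P by have := PsP P PP; case/andP.
    have Hz : forall f, f \in cbd P -> ~~ pred1 e0 f -> sig sigma (embE x f) = 0.
      by move=> f fP fe; have := Hn f fP; rewrite fe /= negbK => /eqP.
    have := Hhat _ (PsH P PP).
    rewrite /dsig bd_emb big_map (@sum_one _ _ _ (pred1 e0) _ e0 He0 (eqxx _) (eqP Hc) Hz) subrr.
    by move=> Hg; move: g0; rewrite -Hg eqxx.
  have [H1 /andP [H2 H3]] := @head_filter _ _ _ e0 Hh.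
  by split.
pose h0 P := cU (f0 P).
have Hh0 : forall P, P \in Ps -> h0 P \in Ts0 j s P.
  move=> P PP; have [H1 H2 _] := Hf0 P PP.
  rewrite /Ts0 /h0; apply: map_f; rewrite mem_filter H1 andbT; exact: H2.
have HA : forall P, P \in Ps -> h0 P \in A.
  by move=> P PP; apply/flatten_mapP; exists P => //; apply: Hh0.
pose sl := map (embE x) (map h0 Ps).
pose L := [seq u <- posE N | sig sigma u != 0].
have sl_uniq : uniq sl.
  rewrite map_inj_uniq; last by apply: embE_inj.
  by apply: (@uniq_flat _ _ (Ts0 j s)).
have sl_L : {subset sl <= L}.
  move=> u /mapP [c /mapP [P PP ->] ->].
  have [H1 H2 H3] := Hf0 P PP.
  rewrite mem_filter; apply/andP; split.
    have -> : embE x (h0 P) = ((embE x (f0 P)).1.1, (embE x (f0 P)).1.2, true) by [].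
    by rewrite sigU.
  apply: posE_mem => //.
  exact: (hEP P PP _ H1).
have size_sl : size sl = 6%N by rewrite !size_map G1.
have card_ge6 : (6 <= card_supp_sigma N sigma)%N.
  by rewrite /card_supp_sigma -size_sl; apply: card_lb.
case: (boolP (all (fun u => u \in sl) L)) => Hall; last first.
  left; move/allPn: Hall => [u uL usl].
  rewrite /card_supp_sigma.
  apply: leq_trans (@card_lb _ (u :: sl) L _ _); first by rewrite /= size_sl.
    by rewrite cons_uniq usl sl_uniq.
  by move=> y; rewrite inE => /orP [/eqP -> //|]; apply: sl_L.
right.
have card6 : card_supp_sigma N sigma = 6%N.
  apply/eqP; rewrite eqn_leq card_ge6 andbT -size_sl.
  by apply: card_ub; move=> y yL; move/allP: Hall; apply.
split => //.
have supp0 : forall f, in_EN N f -> (f.1.1, f.1.2, true) \notin sl -> sig sigma f = 0.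
  move=> f fN fsl; apply/eqP; rewrite -sigU; apply/negPn/negP => nz.
  move/negP: fsl; apply; move/allP: Hall; apply.
  by rewrite mem_filter nz /=; apply: posE_mem.
have notin_sl : forall c, c \notin A -> embE x c \notin sl.
  move=> c cA; apply/negP => /mapP [c' /mapP [P PP ->] /embE_inj E].
  by move: (HA P PP); rewrite -E (negbTE cA).
have se0 : sig sigma (embE x e0) = 0 by apply: supp0 => //; apply: (notin_sl (cU e0)).
pose Q P := outw A (h0 P).
have HQ : forall P, P \in Ps -> isol A (h0 P) (Q P) by move=> P PP; apply: G4; apply: HA.
pose pl := map (embP x) (map cpos Ps ++ map Q Ps).
rewrite /card_supp_dsigma.
apply: leq_trans (@card_lb _ pl _ _ _).
  by rewrite /pl size_map size_cat !size_map G1.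
  rewrite /pl map_inj_uniq; last by apply: embP_inj.
  rewrite cat_uniq G6 /=; apply/andP; split.
    apply/hasPn => q /mapP [P PP ->]; apply: G7.
    by apply: map_f; apply: HA.
  apply: (@uniq_flat _ _ (fun P => map (outw A) (Ts0 j s P))).
    suff -> : flatten (map (fun P => map (outw A) (Ts0 j s P)) Ps) = map (outw A) A by [].
    by rewrite /A /allT map_flatten -map_comp.
  by move=> P PP; apply: map_f; apply: Hh0.
move=> p; rewrite /pl map_cat mem_cat => /orP [] /mapP [c /mapP [P PP ->] ->].
  have -> : embP x (cpos P) = ((embP x P).1, true) by [].
  rewrite mem_filter; apply/andP; split.
    rewrite dsig_pos; have := Hhat _ (PsH P PP); rewrite se0 subr0 => ->; exact: g0.
  apply: posP_mem => //; rewrite in_PN_pos /in_PN.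
  have /andP [Hv _] := PsP P PP.
  apply/andP; split; first exact: Hv.
  by rewrite bd_emb all_map; apply/allP => f fP; apply: (hEP P PP).
have [H1 H2 H3] := Hf0 P PP.
have /and4P [Qv Qpos /eqP Qc Qall] := HQ P PP.
have : has (fun f => cU f == h0 P) (cbd (Q P)) by rewrite has_count Qc.
case/hasP => ft ftQ /eqP ftU.
have Qe : Q P = ((Q P).1, true) by move: Qpos; case: (Q P) => ? [].
have hEQ : forall f, f \in cbd (Q P) -> in_EN N (embE x f).
  move=> f fQ.
  case: (@cU_cases ft (f0 P) ftU) => Eft.
    apply: (Hbh (embP x P) (embE x (f0 P)) (embP x (Q P))).
    - exact: PsH.
    - by rewrite bd_emb map_f.
    - by rewrite inhat_emb /cin_hat Qv -Eft ftQ.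
    - by rewrite bd_emb map_f.
  have : in_EN N (embE x (ceneg f)).
    apply: (Hbh (embP x P) (embE x (f0 P)) (embP x ((Q P).1, false))).
    - exact: PsH.
    - by rewrite bd_emb map_f.
    - rewrite inhat_emb /cin_hat.
      apply/andP; split; first exact: Qv.
      rewrite cbd_false -Qe; apply/mapP; exists ft => //.
      by rewrite Eft; case: (f0 P) => [[? ?] []].
    - by rewrite bd_emb cbd_false -Qe map_f // map_f.
  by [].
rewrite mem_filter; apply/andP; split.
  rewrite /dsig bd_emb big_map (@sum_one _ _ _ (fun f => cU f == h0 P) _ ft) //.
  - case: (@cU_cases ft (f0 P) ftU) => ->; first exact: H3.
    have -> : embE x (ceneg (f0 P)) = eneg (embE x (f0 P)) by [].
    by rewrite sig_eneg oppr_eq0.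
  - by rewrite /= ftU.
  - move=> f fQ fU; apply: supp0; first exact: hEQ.
    have -> : ((embE x f).1.1, (embE x f).1.2, true) = embE x (cU f) by [].
    apply: notin_sl.
    by move/allP: Qall => /(_ f fQ); rewrite (negbTE fU).
apply: posP_mem => //.
rewrite /in_PN; apply/andP; split; first exact: Qv.
by rewrite bd_emb all_map; apply/allP => f fP; apply: hEQ.
Qed.
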